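(* Let $\mathcal{F}$ satisfy the standard conditions and be closed under the minimizer operation. Then $\mathbb{R}_{\mathcal{F}}$ is a real closed field.
   Context: $\mathbb{N}=\{0,1,2,\dots\}$. $\mathcal{F}$ is a set of functions $\mathbb{N}^n\to\mathbb{N}$; it satisfies the standard conditions if it contains the zero function, the successor, all projections $P^n_i$, addition, multiplication and modified subtraction $x\dot- y=\max(x-y,0)$, and is closed under composition. For $f:\mathbb{N}^{k+1}\to\mathbb{N}$, $\mu f(x_1,\dots,x_{k+1})=\min\{j: f(x_1,\dots,x_k,j)=0\ \text{or}\ j=x_{k+1}\}$; $\mathcal{F}$ is closed under the minimizer operation if $f\in\mathcal{F}\Rightarrow\mu f\in\mathcal{F}$. An $\mathcal{F}$-sequence is $A(x)=\frac{f(x)-g(x)}{h(x)+1}$ with $f,g,h:\mathbb{N}\to\mathbb{N}$ in $\mathcal{F}$. $\alpha\in\mathbb{R}$ is $\mathcal{F}$-computable if some $\mathcal{F}$-sequence $A$ satisfies $|A(x)-\alpha|\le\frac1{x+1}$ for all $x$; $\mathbb{R}_{\mathcal{F}}$ is the set of $\mathcal{F}$-computable reals. *)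

(* Defs.v *)
From HB Require Import structures.
From mathcomp Require Import all_boot all_order all_algebra.
From mathcomp Require Import Rstruct.
From Stdlib Require Import Rdefinitions.
Set Implicit Arguments. Unset Strict Implicit. Unset Printing Implicit Defensive.
Import Order.TTheory GRing.Theory Num.Theory.

(* A function N^n -> N is modelled as a map ('I_n -> nat) -> nat.
   A class F of such functions (of all arities) is a predicate indexed by the arity. *)
Definition fclass := forall n : nat, (('I_n -> nat) -> nat) -> Prop.

Definition upd_last (k : nat) (x : 'I_k.+1 -> nat) (j : nat) : 'I_k.+1 -> nat :=
  fun i => if i == ord_max then j else x i.

Definition standard_conditions (F : fclass) : Prop :=
  F 1 (fun _ => 0%N) /\
  F 1 (fun x => (x ord0).+1) /\
  (forall n (i : 'I_n), F n (fun x => x i)) /\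
  F 2 (fun x => (x ord0 + x ord_max)%N) /\
  F 2 (fun x => (x ord0 * x ord_max)%N) /\
  F 2 (fun x => (x ord0 - x ord_max)%N) /\
  (forall m n (f : ('I_m -> nat) -> nat) (g : 'I_m -> ('I_n -> nat) -> nat),
         F m f -> (forall i, F n (g i)) ->
         F n (fun x => f (fun i => g i x))).

(* minimizer: mu f (x_1..x_{k+1}) = min { j | f(x_1..x_k, j) = 0 or j = x_{k+1} } *)
Definition minimizer (k : nat) (f : ('I_k.+1 -> nat) -> nat) : ('I_k.+1 -> nat) -> nat :=
  fun x => find (fun j => (f (upd_last x j) == 0%N) || (j == x ord_max))
                (iota 0 (x ord_max).+1).

Definition closed_minimizer (F : fclass) : Prop :=
  forall k (f : ('I_k.+1 -> nat) -> nat), F k.+1 f -> F k.+1 (minimizer f).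

Local Open Scope ring_scope.

Definition un (f : ('I_1 -> nat) -> nat) (x : nat) : nat := f (fun _ => x).

Definition Fseq (f g h : ('I_1 -> nat) -> nat) (x : nat) : R :=
  ((un f x)%:R - (un g x)%:R) / ((un h x)%:R + 1).

Definition F_computable (F : fclass) (alpha : R) : Prop :=
  exists f g h, [/\ F 1 f, F 1 g, F 1 h &
    forall x : nat, `|Fseq f g h x - alpha| <= 1 / (x%:R + 1)].

(* S is a subfield of R which (with the order inherited from R, its unique field
   ordering) is a real closed field in the sense of MathComp's rcfType axiom
   (Num.real_closed_axiom): intermediate value property for polynomials over S. *)
Definition real_closed_subfield (S : R -> Prop) : Prop :=
  S 0 /\ S 1 /\
  (forall a b, S a -> S b -> S (a + b)) /\
  (forall a, S a -> S (- a)) /\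
  (forall a b, S a -> S b -> S (a * b)) /\
  (forall a, S a -> a != 0 -> S a^-1) /\
  (forall (p : {poly R}) (a b : R), (forall i, S p`_i) -> S a -> S b ->
         a <= b -> p.[a] <= 0 <= p.[b] ->
         exists x, [/\ S x, a <= x <= b & root p x]).

(* Main.v *)
Require Import Defs.
From Stdlib Require Import Rdefinitions FunctionalExtensionality IndefiniteDescription.
From HB Require Import structures.
From mathcomp Require Import all_boot all_order all_algebra.
From mathcomp Require Import Rstruct polyrcf.
From mathcomp Require Import zify ring lra.
Set Implicit Arguments. Unset Strict Implicit. Unset Printing Implicit Defensive.
Import Order.TTheory GRing.Theory Num.Theory.

Local Open Scope ring_scope.

Section PolyFacts.
Variable T : rcfType.

Lemma cont_sign (q : {poly T}) r : q.[r] != 0 ->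
  exists2 d, 0 < d & forall y, `|y - r| < d ->
    (0 < q.[r] -> 0 < q.[y]) /\ (q.[r] < 0 -> q.[y] < 0).
Proof.
move=> qr0; have hq : 0 < `|q.[r]| by rewrite normr_gt0.
have [d d0 Hd] := poly_cont r q hq.
exists d => // y /Hd; rewrite ltr_norml => /andP[h1 h2]; split => hqr.
  by move: h1; rewrite gtr0_norm //; lra.
by move: h2; rewrite ltr0_norm //; lra.
Qed.

Lemma hornerMX (q : {poly T}) s k t :
  (q * ('X - s%:P) ^+ k).[t] = q.[t] * (t - s) ^+ k.
Proof. by rewrite hornerM horner_exp hornerXsubC. Qed.

Lemma good_root_aux (p : {poly T}) : p != 0 -> forall n a b (L : seq T),
  uniq L -> all (root p) L -> (forall l, l \in L -> (l < a) || (b < l)) ->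
  (size p <= size L + n)%N -> a < b -> p.[a] < 0 -> 0 < p.[b] ->
  exists s q k, [/\ a < s < b, p = q * ('X - s%:P) ^+ k, odd k & 0 < q.[s]].
Proof.
move=> p0; elim=> [|n IH] a b L uL rL oL sL ab pa pb.
all: have [r] : {r | r \in `]a, b[ & root p r}
  by apply: poly_ivtoo; [exact: ltW | nra].
all: rewrite in_itv /= => /andP[ar rb] rr.
all: have rL' : r \notin L by apply/negP => /oL /orP[] ?; lra.
all: have := max_poly_roots p0 (_ : all (root p) (r :: L)) (_ : uniq (r :: L)).
all: rewrite /= ?rr ?rL ?rL' ?uL // => /(_ isT isT) hs.
  by have := leq_trans hs sL; rewrite addn0 ltnNge leqW.
have [m [q /implyP/(_ p0) qr0 pE]] := multiplicity_XsubC p r.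
have [d d0 Hd] := cont_sign qr0.
set mm := Num.min d (Num.min (r - a) (b - r)).
have m1 : mm <= d by rewrite /mm ge_min lexx.
have m2 : mm <= r - a by rewrite /mm ge_min ge_min lexx orbT.
have m3 : mm <= b - r by rewrite /mm ge_min ge_min lexx !orbT.
have m0 : 0 < mm by rewrite /mm !lt_min d0 !subr_gt0 ar rb.
set eta := mm / 2.
have eta0 : 0 < eta by rewrite /eta; lra.
have etad : eta < d by rewrite /eta; lra.
have etaa : eta < r - a by rewrite /eta; lra.
have etab : eta < b - r by rewrite /eta; lra.
have oL' : forall l, l \in L -> (l < a) || (b < l) by [].
have U1 : uniq (r :: L) by rewrite /= rL'.
have U2 : all (root p) (r :: L) by rewrite /= rr.
have U4 : (size p <= size (r :: L) + n)%N by rewrite /= addSnnS.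
have [qneg|qpos] := ltrP q.[r] 0.
  have U3 : forall l, l \in r :: L -> (l < r + eta) || (b < l).
    move=> l; rewrite inE => /orP[/eqP->|/oL]; first by apply/orP; left; lra.
    by case/orP=> h; apply/orP; [left|right]; lra.
  have U5 : r + eta < b by lra.
  have U6 : p.[r + eta] < 0.
    rewrite pE hornerMX pmulr_llt0 ?exprn_gt0 //; last by rewrite addrAC subrr add0r.
    by apply: (proj2 (Hd _ _)) => //; rewrite addrAC subrr add0r gtr0_norm.
  have [s [q' [k [H1 H2 H3 H4]]]] := IH _ _ _ U1 U2 U3 U4 U5 U6 pb.
  by exists s, q', k; split => //; move: H1 => /andP[? ?]; apply/andP; split; lra.
have qpos' : 0 < q.[r] by rewrite lt_neqAle eq_sym qr0.
case om : (odd m); first by exists r, q, m; split => //; rewrite ar rb.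
have U3 : forall l, l \in r :: L -> (l < a) || (r - eta < l).
  move=> l; rewrite inE => /orP[/eqP->|/oL]; first by apply/orP; right; lra.
  by case/orP=> h; apply/orP; [left|right]; lra.
have U5 : a < r - eta by lra.
have U6 : 0 < p.[r - eta].
  rewrite pE hornerMX pmulr_lgt0; last first.
    by rewrite addrAC subrr add0r exprNn -signr_odd om expr0 mul1r exprn_gt0.
  by apply: (proj1 (Hd _ _)) => //; rewrite addrAC subrr add0r normrN gtr0_norm.
have [s [q' [k [H1 H2 H3 H4]]]] := IH _ _ _ U1 U2 U3 U4 U5 pa U6.
by exists s, q', k; split => //; move: H1 => /andP[? ?]; apply/andP; split; lra.
Qed.

Lemma good_root (p : {poly T}) a b : a < b -> p.[a] < 0 -> 0 < p.[b] ->
  exists s q k, [/\ a < s < b, p = q * ('X - s%:P) ^+ k, odd k & 0 < q.[s]].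
Proof.
move=> ab pa pb; have p0 : p != 0 by apply/eqP => p0; move: pa; rewrite p0 horner0 ltxx.
by apply: (good_root_aux p0 (n := size p) (L := [::])).
Qed.

Lemma good_local (p q : {poly T}) s k : p = q * ('X - s%:P) ^+ k -> odd k -> 0 < q.[s] ->
  exists eta m, [/\ 0 < eta, 0 < m,
    (forall t, s - eta <= t <= s -> p.[t] <= 0) &
    (forall t, s <= t <= s + eta -> m * (t - s) ^+ k <= p.[t])].
Proof.
move=> pE ok qs.
have hq2 : 0 < q.[s] / 2 by rewrite divr_gt0.
have [d d0 Hd] := poly_cont s q hq2.
have Hq : forall t, `|t - s| < d -> q.[s] / 2 <= q.[t].
  move=> t /Hd; rewrite ltr_norml => /andP[h1 _]; lra.
exists (d / 2), (q.[s] / 2); split; rewrite ?divr_gt0 //.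
  move=> t /andP[h1 h2]; rewrite pE hornerMX.
  have qt : 0 < q.[t].
    apply: (lt_le_trans _ (Hq _ _)); first by rewrite divr_gt0.
    rewrite ler0_norm; [lra | lra].
  rewrite pmulr_rle0 // -[t - s]opprB exprNn -signr_odd ok expr1 mulN1r oppr_le0.
  by rewrite exprn_ge0 // subr_ge0.
move=> t /andP[h1 h2]; rewrite pE hornerMX.
apply: ler_wpM2r; first by rewrite exprn_ge0 // subr_ge0.
by apply: Hq; rewrite ger0_norm; lra.
Qed.

Lemma approx_poly (p : {poly T}) (A : nat -> T) (t T1 ee : T) :
  (forall i, `|A i - p`_i| <= ee) -> `|t| <= T1 -> 1 <= T1 ->
  `|\sum_(i < size p) A i * t ^+ i - p.[t]| <= (size p)%:R * T1 ^+ size p * ee.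
Proof.
move=> hA ht hT; rewrite horner_coef -sumrB.
apply: (le_trans (ler_norm_sum _ _ _)).
have -> : (size p)%:R * T1 ^+ size p * ee = \sum_(i < size p) (T1 ^+ size p * ee).
  by rewrite sumr_const card_ord -mulrA mulr_natl.
apply: ler_sum => i _.
have ee0 : 0 <= ee by apply: le_trans (hA 0%N); exact: normr_ge0.
have h0 : `|t| ^+ i <= T1 ^+ i.
  by apply: lerXn2r => //; rewrite nnegrE ?normr_ge0 // (le_trans _ ht).
have h1 : `|t ^+ i| <= T1 ^+ size p.
  by rewrite normrX (le_trans h0) // ler_weXn2l // ltnW.
by rewrite -mulrBl normrM mulrC; apply: ler_pM => //; exact: normr_ge0.
Qed.

End PolyFacts.

Section FClosure.
Variable F : forall n : nat, (('I_n -> nat) -> nat) -> Prop.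
Arguments F : clear implicits.
Hypothesis HF : standard_conditions F.
Hypothesis HM : closed_minimizer F.

Lemma Fext n f g : F n f -> (forall x, f x = g x) -> F n g.
Proof. by move=> Hf e; have <- : f = g by apply: functional_extensionality. Qed.

Lemma Fcomp m n (h : ('I_m -> nat) -> nat) (g : 'I_m -> ('I_n -> nat) -> nat) :
  F m h -> (forall i, F n (g i)) -> F n (fun x => h (fun i => g i x)).
Proof. by case: HF => _ [_ [_ [_ [_ [_ H]]]]]; apply: H. Qed.

Lemma Fproj n (i : 'I_n) : F n (fun x => x i).
Proof. by case: HF => _ [_ [H _]]. Qed.

Lemma Fop n (op : nat -> nat -> nat) a b :
  F 2 (fun y => op (y ord0) (y ord_max)) -> F n a -> F n b ->
  F n (fun x => op (a x) (b x)).
Proof.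
move=> Hop Ha Hb.
pose g : 'I_2 -> ('I_n -> nat) -> nat := fun i => if i == ord0 then a else b.
apply: Fext (Fcomp Hop (_ : forall i, F n (g i))) _ => [i|x].
  by rewrite /g; case: (i == ord0).
by rewrite /g /=.
Qed.

Lemma Fadd n a b : F n a -> F n b -> F n (fun x => a x + b x)%N.
Proof. by apply: Fop; case: HF => _ [_ [_ [H _]]]. Qed.
Lemma Fmul n a b : F n a -> F n b -> F n (fun x => a x * b x)%N.
Proof. by apply: Fop; case: HF => _ [_ [_ [_ [H _]]]]. Qed.
Lemma Fsub n a b : F n a -> F n b -> F n (fun x => a x - b x)%N.
Proof. by apply: Fop; case: HF => _ [_ [_ [_ [_ [H _]]]]]. Qed.

Lemma Fconst1 c : F 1 (fun _ => c).
Proof.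
elim: c => [|c IH]; first by case: HF.
have Hs : F 1 (fun x => (x ord0).+1) by case: HF => _ [].
exact: (Fcomp Hs (g := fun _ => fun _ => c) (fun _ => IH)).
Qed.

Lemma Fconst n c : F n.+1 (fun _ => c).
Proof. exact: (Fcomp (Fconst1 c) (g := fun _ x => x ord0) (fun _ => Fproj _)). Qed.

Definition F2 (f : nat -> nat -> nat) := F 2 (fun x => f (x ord0) (x ord_max)).

Lemma F2_fst : F2 (fun x _ => x). Proof. exact: Fproj. Qed.
Lemma F2_snd : F2 (fun _ j => j). Proof. exact: Fproj. Qed.
Lemma F2_const c : F2 (fun _ _ => c). Proof. exact: Fconst. Qed.
Lemma F2_add f g : F2 f -> F2 g -> F2 (fun x j => f x j + g x j)%N.
Proof. exact: Fadd. Qed.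
Lemma F2_mul f g : F2 f -> F2 g -> F2 (fun x j => f x j * g x j)%N.
Proof. exact: Fmul. Qed.
Lemma F2_sub f g : F2 f -> F2 g -> F2 (fun x j => f x j - g x j)%N.
Proof. exact: Fsub. Qed.

Lemma F2_subst g a b : F2 g -> F2 a -> F2 b -> F2 (fun x j => g (a x j) (b x j)).
Proof. move=> Hg Ha Hb; exact: (Fop Hg Ha Hb). Qed.

Lemma F2_exp f k : F2 f -> F2 (fun x j => f x j ^ k)%N.
Proof.
move=> Hf; elim: k => [|k IH]; first exact: F2_const.
by apply: Fext (F2_mul Hf IH) _ => x; rewrite expnS.
Qed.

Lemma F2_min f : F2 f ->
  F2 (fun x b => find (fun j => (f x j == 0%N) || (j == b)) (iota 0 b.+1)).
Proof.
move=> Hf; have := HM Hf; rewrite /minimizer /upd_last /=.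
by [].
Qed.

Lemma min_spec (P : pred nat) b (m := find (fun j => P j || (j == b)) (iota 0 b.+1)) :
  [/\ (m <= b)%N, P m || (m == b) & forall i, (i < m)%N -> ~~ P i].
Proof.
have Hh : has (fun j => P j || (j == b)) (iota 0 b.+1).
  by apply/hasP; exists b; rewrite ?mem_iota ?eqxx ?orbT //; lia.
have Hlt : (m < b.+1)%N by rewrite -[X in (_ < X)%N](size_iota 0) -has_find.
split; first by [].
  by have := nth_find 0%N Hh; rewrite nth_iota // add0n.
move=> i lim; have := before_find 0%N lim; rewrite nth_iota ?add0n; last lia.
by case: (P i).
Qed.


Local Open Scope ring_scope.

Definition Frat2 (r : nat -> nat -> R) := exists P Q H, [/\ F2 P, F2 Q, F2 H &
  forall x j, r x j = ((P x j)%:R - (Q x j)%:R) / ((H x j)%:R + 1)].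

Lemma Frat2_ext r r' : Frat2 r -> (forall x j, r x j = r' x j) -> Frat2 r'.
Proof. by move=> [P [Q [H [HP HQ HH E]]]] E'; exists P, Q, H; split => // x j; rewrite -E'. Qed.

Lemma Frat2_nat u : F2 u -> Frat2 (fun x j => (u x j)%:R).
Proof.
move=> Hu; exists u, (fun _ _ => 0%N), (fun _ _ => 0%N); split => //; try exact: F2_const.
by move=> x j; rewrite subr0 add0r divr1.
Qed.

Lemma Frat2_cnat c : Frat2 (fun _ _ => c%:R).
Proof. exact: (Frat2_nat (F2_const c)). Qed.

Lemma Frat2_crat a b e : Frat2 (fun _ _ => (a%:R - b%:R) / (e%:R + 1)).
Proof. by exists (fun _ _ => a), (fun _ _ => b), (fun _ _ => e); split => //; exact: F2_const. Qed.

Lemma Frat2_opp r : Frat2 r -> Frat2 (fun x j => - r x j).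
Proof.
move=> [P [Q [H [HP HQ HH E]]]]; exists Q, P, H; split => // x j.
by rewrite E -mulNr opprB.
Qed.

Lemma natp1_neq0 {T : numDomainType} (n : nat) : n%:R + 1 != 0 :> T.
Proof. by rewrite natr1 pnatr_eq0. Qed.

Lemma add_frac (T: fieldType) (a b c d u v : T) : u != 0 -> v != 0 ->
  (a - b)/u + (c - d)/v = ((a*v + c*u) - (b*v + d*u)) / (u*v).
Proof. move=> hu hv. field. by rewrite hu hv. Qed.
Lemma mul_frac (T: fieldType) (a b c d u v : T) : u != 0 -> v != 0 ->
  ((a - b)/u) * ((c - d)/v) = ((a*c + b*d) - (a*d + b*c)) / (u*v).
Proof. move=> hu hv. field. by rewrite hu hv. Qed.

Lemma den_prod (h h' : nat) :
  ((h * h' + h + h')%N%:R + 1 : R^o) = (h%:R + 1) * (h'%:R + 1).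
Proof. rewrite !natrD natrM. ring. Qed.

Lemma Frat2_add r s : Frat2 r -> Frat2 s -> Frat2 (fun x j => r x j + s x j).
Proof.
move=> [P [Q [H [HP HQ HH E]]]] [P' [Q' [H' [HP' HQ' HH' E']]]].
exists (fun x j => P x j * (H' x j + 1) + P' x j * (H x j + 1))%N,
       (fun x j => Q x j * (H' x j + 1) + Q' x j * (H x j + 1))%N,
       (fun x j => H x j * H' x j + H x j + H' x j)%N; split.
- by apply: F2_add; apply: F2_mul => //; apply: F2_add => //; exact: F2_const.
- by apply: F2_add; apply: F2_mul => //; apply: F2_add => //; exact: F2_const.
- by apply: F2_add; [apply: F2_add|] => //; apply: F2_mul.
move=> x j; rewrite E E' add_frac ?natp1_neq0 // den_prod.
by rewrite !(natrD, natrM).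
Qed.

Lemma Frat2_mul r s : Frat2 r -> Frat2 s -> Frat2 (fun x j => r x j * s x j).
Proof.
move=> [P [Q [H [HP HQ HH E]]]] [P' [Q' [H' [HP' HQ' HH' E']]]].
exists (fun x j => P x j * P' x j + Q x j * Q' x j)%N,
       (fun x j => P x j * Q' x j + Q x j * P' x j)%N,
       (fun x j => H x j * H' x j + H x j + H' x j)%N; split.
- by apply: F2_add; apply: F2_mul.
- by apply: F2_add; apply: F2_mul.
- by apply: F2_add; [apply: F2_add|] => //; apply: F2_mul.
move=> x j; rewrite E E' mul_frac ?natp1_neq0 // den_prod.
by rewrite !(natrD, natrM).
Qed.

Lemma Frat2_subst r a b : Frat2 r -> F2 a -> F2 b -> Frat2 (fun x j => r (a x j) (b x j)).
Proof.
move=> [P [Q [H [HP HQ HH E]]]] Ha Hb.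
exists (fun x j => P (a x j) (b x j)), (fun x j => Q (a x j) (b x j)),
  (fun x j => H (a x j) (b x j)); split; try exact: F2_subst.
by move=> x j; rewrite E.
Qed.

Lemma Frat2_sub r s : Frat2 r -> Frat2 s -> Frat2 (fun x j => r x j - s x j).
Proof. by move=> Hr Hs; apply: Frat2_add => //; exact: Frat2_opp. Qed.

Lemma Frat2_inv r : Frat2 r -> Frat2 (fun x j => (r x j)^-1).
Proof.
move=> [P [Q [H [HP HQ HH E]]]].
have Hsg : forall f g, F2 f -> F2 g -> F2 (fun x j => (H x j + 1) * (1 - (1 - (f x j - g x j))))%N.
  move=> f g Hf Hg; apply: F2_mul; first by apply: F2_add => //; exact: F2_const.
  apply: F2_sub; first exact: F2_const.
  by apply: F2_sub; [exact: F2_const| exact: F2_sub].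
exists (fun x j => (H x j + 1) * (1 - (1 - (P x j - Q x j))))%N,
       (fun x j => (H x j + 1) * (1 - (1 - (Q x j - P x j))))%N,
       (fun x j => (P x j - Q x j) + (Q x j - P x j) - 1)%N; split; try exact: Hsg.
  by apply: F2_sub; [apply: F2_add; exact: F2_sub | exact: F2_const].
move=> x j; rewrite E.
move: (P x j) (Q x j) (H x j) => p q h.
have hh := natp1_neq0 (T:=R) h.
case: (ltngtP p q) => [lt|lt|->].
- have -> : (1 - (1 - (p - q)) = 0)%N by lia.
  have -> : (1 - (1 - (q - p)) = 1)%N by lia.
  have -> : ((p - q) + (q - p) - 1 = (q - p).-1)%N by lia.
  have e : ((q - p).-1%:R + 1 : R^o) = q%:R - p%:R.
    by rewrite natr1 prednK ?subn_gt0 // natrB // ltnW.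
  have hq : q%:R - p%:R != 0 :> R^o by rewrite subr_eq0 eqr_nat; lia.
  rewrite e muln0 muln1 natrD.
  move: (p%:R) (q%:R) (h%:R) hq hh => a b c hq hh.
  field. by rewrite hq hh subr_eq0 eq_sym -subr_eq0.
- have -> : (1 - (1 - (p - q)) = 1)%N by lia.
  have -> : (1 - (1 - (q - p)) = 0)%N by lia.
  have -> : ((p - q) + (q - p) - 1 = (p - q).-1)%N by lia.
  have e : ((p - q).-1%:R + 1 : R^o) = p%:R - q%:R.
    by rewrite natr1 prednK ?subn_gt0 // natrB // ltnW.
  have hq : p%:R - q%:R != 0 :> R^o by rewrite subr_eq0 eqr_nat; lia.
  rewrite e muln0 muln1 natrD.
  move: (p%:R) (q%:R) (h%:R) hq hh => a b c hq hh.
  field. by rewrite hq hh.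
- have -> : (1 - (1 - (q - q)) = 0)%N by lia.
  by rewrite muln0 subrr !mul0r invr0 subrr mul0r.
Qed.

Lemma Frat2_test r : Frat2 r ->
  exists T, F2 T /\ forall x j, (T x j == 0)%N = (0 < r x j).
Proof.
move=> [P [Q [H [HP HQ HH E]]]].
exists (fun x j => Q x j + 1 - P x j)%N; split.
  by apply: F2_sub => //; apply: F2_add => //; exact: F2_const.
move=> x j; rewrite E pmulr_lgt0 ?invr_gt0; last by rewrite natr1 ltr0n.
by rewrite subr_gt0 ltr_nat subn_eq0 addn1.
Qed.

Lemma Frat2_sum n (r : 'I_n -> nat -> nat -> R) :
  (forall i, Frat2 (r i)) -> Frat2 (fun x j => \sum_(i < n) r i x j).
Proof.
elim: n r => [|n IH] r Hr.
  by apply: Frat2_ext (Frat2_cnat 0) _ => x j; rewrite big_ord0.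
apply: Frat2_ext (Frat2_add (IH (fun i => r (widen_ord (leqnSn n) i)) _) (Hr ord_max)) _.
  by move=> i; exact: Hr.
by move=> x j; rewrite big_ord_recr.
Qed.

Lemma Frat2_exp r k : Frat2 r -> Frat2 (fun x j => r x j ^+ k).
Proof.
move=> Hr; elim: k => [|k IH]; first by apply: Frat2_ext (Frat2_cnat 1) _.
by apply: Frat2_ext (Frat2_mul Hr IH) _ => x j; rewrite exprS.
Qed.

Lemma ler_nat_frac (a b c d : nat) : (0 < b)%N -> (0 < d)%N ->
  (a%:R / b%:R <= c%:R / d%:R :> R^o) = (a * d <= c * b)%N.
Proof.
move=> hb hd.
by rewrite ler_pdivrMr ?ltr0n // mulrAC ler_pdivlMr ?ltr0n // -!natrM ler_nat.
Qed.

Lemma F1_of_F2 (P : nat -> nat -> nat) c : F2 P -> F 1 (fun y => P (y ord0) c).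
Proof. by move=> HP; apply: (Fop HP (Fproj ord0) (Fconst 0 c)). Qed.

Lemma comp_of_Frat2 (al : R) r : Frat2 r ->
  (forall x, `|r x 0%N - al| <= 1 / (x%:R + 1)) -> F_computable F al.
Proof.
move=> [P [Q [H [HP HQ HH E]]]] Hb.
exists (fun y => P (y ord0) 0%N), (fun y => Q (y ord0) 0%N), (fun y => H (y ord0) 0%N).
split; try exact: F1_of_F2.
by move=> x; have := Hb x; rewrite E.
Qed.

Lemma F2_of_F1 (f : ('I_1 -> nat) -> nat) : F 1 f -> F2 (fun x _ => un f x).
Proof. by move=> Hf; exact: (Fcomp Hf (g := fun _ y => y ord0) (fun _ => Fproj _)). Qed.

Lemma Frat2_of_comp (al : R) : F_computable F al ->
  exists r, Frat2 r /\ forall x j, `|r x j - al| <= 1 / (x%:R + 1).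
Proof.
move=> [f [g [h [Hf Hg Hh Hb]]]].
exists (fun x _ => Fseq f g h x); split => //.
exists (fun x _ => un f x), (fun x _ => un g x), (fun x _ => un h x); split;
  try exact: F2_of_F1.
by [].
Qed.

Lemma comp_of_approx (al : R) r (C K : nat) : Frat2 r ->
  (forall x, (K <= x)%N -> `|r x 0%N - al| <= C%:R / (x%:R + 1)) -> F_computable F al.
Proof.
move=> Hr Hb.
have Hr' : Frat2 (fun x j => r ((C + 1) * (x + (K + 1)) - 1)%N 0%N).
  apply: Frat2_subst => //; last exact: F2_const.
  apply: F2_sub; last exact: F2_const.
  apply: F2_mul; first exact: F2_const.
  apply: F2_add; [exact: F2_fst | exact: F2_const].
apply: (comp_of_Frat2 Hr') => x.
have hy : (K <= (C + 1) * (x + (K + 1)) - 1)%N by nia.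
apply: (le_trans (Hb _ hy)).
have -> : (((C + 1) * (x + (K + 1)) - 1)%N%:R + 1 : R^o) = ((C + 1) * (x + (K + 1)))%N%:R.
  by rewrite natr1; congr (_%:R); nia.
rewrite natr1 -[1 : R^o]/(1%:R) ler_nat_frac //; nia.
Qed.

Lemma nat_ge {T : archiRealFieldType} (x : T) : exists n : nat, x <= n%:R.
Proof.
exists (Num.truncn `|x|).+1; apply: (le_trans (ler_norm x)).
by have /andP[_ /ltW] := truncn_itv (normr_ge0 x).
Qed.

Lemma e_pos (x : nat) : 0 < 1 / (x%:R + 1) :> R^o.
Proof. by rewrite div1r invr_gt0 natr1 ltr0n. Qed.

Lemma e_le1 (x : nat) : 1 / (x%:R + 1) <= 1 :> R^o.
Proof. by rewrite div1r invf_le1 ?natr1 ?ltr0n // ler1n. Qed.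

Lemma Cdiv (C x : nat) : C%:R / (x%:R + 1) = C%:R * (1 / (x%:R + 1)) :> R^o.
Proof. by rewrite mul1r. Qed.

Definition SF (x : R^o) : Prop := F_computable F x.

Lemma S_add a b : SF a -> SF b -> SF (a + b).
Proof.
move=> /Frat2_of_comp [ra [Ha Hra]] /Frat2_of_comp [rb [Hb Hrb]].
apply: (@comp_of_approx _ _ 2 0 (Frat2_add Ha Hb)) => x _.
rewrite Cdiv; set e := 1 / _.
rewrite opprD addrACA (le_trans (ler_normD _ _)) //.
have := Hra x 0%N; have := Hrb x 0%N; rewrite -/e. lra.
Qed.

Lemma S_opp a : SF a -> SF (- a).
Proof.
move=> /Frat2_of_comp [ra [Ha Hra]].
apply: (@comp_of_approx _ _ 1 0 (Frat2_opp Ha)) => x _.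
by rewrite -opprD normrN Cdiv mul1r.
Qed.

Lemma S_mul a b : SF a -> SF b -> SF (a * b).
Proof.
move=> /Frat2_of_comp [ra [Ha Hra]] /Frat2_of_comp [rb [Hb Hrb]].
have [C HC] := nat_ge (`|a| + `|b| + 1).
apply: (@comp_of_approx _ _ C 0 (Frat2_mul Ha Hb)) => x _.
rewrite Cdiv; set e := 1 / _.
have he := e_pos x; have he1 := e_le1 x; rewrite -/e in he he1.
set u := ra x 0%N; set v := rb x 0%N.
have h1 : `|u - a| <= e by exact: Hra.
have h2 : `|v - b| <= e by exact: Hrb.
have -> : u * v - a * b = u * (v - b) + (u - a) * b by ring.
apply: (le_trans (ler_normD _ _)); rewrite !normrM.
have hu : `|u| <= `|a| + e.
  have -> : u = (u - a) + a by ring.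
  by apply: (le_trans (ler_normD _ _)); lra.
have t1 : `|u| * `|v - b| <= (`|a| + e) * e.
  by apply: ler_pM => //; exact: normr_ge0.
have t2 : `|u - a| * `|b| <= e * `|b|.
  by apply: ler_wpM2r => //; exact: normr_ge0.
have t3 : (`|a| + e) * e + e * `|b| <= C%:R * e.
  have : (`|a| + e) * e + e * `|b| = (`|a| + `|b| + e) * e by ring.
  by move=> ->; rewrite ler_pM2r //; lra.
lra.
Qed.

Lemma S_0 : SF 0.
Proof.
apply: (comp_of_Frat2 (Frat2_cnat 0)) => x.
by rewrite subrr normr0 ltW // e_pos.
Qed.

Lemma S_1 : SF 1.
Proof.
apply: (comp_of_Frat2 (Frat2_cnat 1)) => x.
by rewrite subrr normr0 ltW // e_pos.
Qed.

Lemma S_inv a : SF a -> a != 0 -> SF a^-1.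
Proof.
move=> /Frat2_of_comp [ra [Ha Hra]] a0.
set A := `|a|; have hA : 0 < A by rewrite normr_gt0.
have [K HK] := nat_ge (2 / A).
have [C HC] := nat_ge (2 / (A * A)).
apply: (@comp_of_approx _ _ C K (Frat2_inv Ha)) => x hx.
rewrite Cdiv; set e := 1 / _.
have he := e_pos x; have he1 := e_le1 x; rewrite -/e in he he1.
set u := ra x 0%N.
have h1 : `|u - a| <= e by exact: Hra.
have hx1 : 2 / A <= x%:R + 1.
  by apply: (le_trans HK); rewrite natr1 ler_nat; lia.
have heA : e <= A / 2.
  rewrite /e ler_pdivrMr; last by rewrite natr1 ltr0n.
  have hA2 : 0 <= A / 2 by rewrite divr_ge0 // ltW.
  have := ler_wpM2l hA2 hx1.
  have e1 : A / 2 * (2 / A) = 1.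
    by field; rewrite gt_eqF.
  by rewrite e1.
have hu : A / 2 <= `|u|.
  have : A <= `|u - a| + `|u|.
    by have := ler_normD (a - u) u; rewrite subrK distrC.
  lra.
have u0 : u != 0 by rewrite -normr_gt0; apply: lt_le_trans hu; rewrite divr_gt0.
have -> : u^-1 - a^-1 = (a - u) / (u * a) by field; rewrite u0 a0.
rewrite normrM normfV normrM -/A ler_pdivrMr; last by rewrite mulr_gt0 // normr_gt0.
have hCA : 1 <= C%:R * (A / 2 * A).
  have e2 : 2 / (A * A) * (A / 2 * A) = 1.
    by field; rewrite gt_eqF.
  have hp : 0 <= A / 2 * A by rewrite !mulr_ge0 // ?invr_ge0 ltW.
  by have := ler_wpM2r hp HC; rewrite e2.
have hCu : 1 <= C%:R * (`|u| * A).
  apply: (le_trans hCA); apply: ler_wpM2l => //; apply: ler_wpM2r => //.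
  exact: ltW.
have : e * 1 <= e * (C%:R * (`|u| * A)) by apply: ler_wpM2l => //; exact: ltW.
rewrite distrC.
have -> : C%:R * e * (`|u| * A) = e * (C%:R * (`|u| * A)) by ring.
lra.
Qed.

Lemma root_computable (p : {poly R}) (s eta m : R^o) k :
  (forall i, SF p`_i) -> 0 < eta -> 0 < m ->
  (forall t, s - eta <= t <= s -> p.[t] <= 0) ->
  (forall t, s <= t <= s + eta -> m * (t - s) ^+ k <= p.[t]) -> SF s.
Proof.
move=> Sp eta0 m0 Hl Hr.
have [RC HRC] : exists RC : nat -> nat -> nat -> R,
    forall i, Frat2 (RC i) /\ forall x j, `|RC i x j - p`_i| <= 1 / (x%:R + 1).
  apply: (functional_choice (fun i (rc : nat -> nat -> R) =>
    Frat2 rc /\ forall x j, `|rc x j - p`_i| <= 1 / (x%:R + 1))).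
  by move=> i; exact: Frat2_of_comp (Sp i).
(* a rational point c slightly left of s *)
have [E HE] := nat_ge (2 / eta).
have [B HB] := nat_ge (`|s| * (E%:R + 1)).
have E1 : 0 < E%:R + 1 :> R^o by rewrite natr1 ltr0n.
pose w : R^o := s * (E%:R + 1) + B%:R.
have w0 : 0 <= w.
  rewrite /w; case: (lerP 0 s) => hs.
    by rewrite addr_ge0 // mulr_ge0 // ltW.
  by move: HB; rewrite ltr0_norm //; nra.
have /andP[tw1 tw2] := truncn_itv w0.
set tw := Num.truncn w in tw1 tw2.
pose c : R^o := (tw%:R - B.+1%:R) / (E%:R + 1).
have cs : c < s.
  rewrite /c ltr_pdivrMr // -natr1; move: tw1; rewrite /w; lra.
have cse : s - eta <= c.
  rewrite /c ler_pdivlMr // -natr1.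
  move: HE; rewrite ler_pdivrMr // => HE.
  move: tw2; rewrite -natr1 /w; nra.
have [Z HZ] := nat_ge (2 * (s - c + 1) + 1).
have [T0 HT0] := nat_ge (`|c| + Z%:R / 2).
pose T1 := T0.+1.
have [M0 HM0] := nat_ge (2 ^+ k.+1 / m).
pose M := M0.+1.
pose n := size p.
pose Y := (2 * M * n * T1 ^ n).+1.
have [K HK] := nat_ge (1 / eta).
pose J x := (Z * (x + 1))%N.
pose y x := (Y * (x + 1) ^ k - 1)%N.
pose tg x j : R^o := c + j%:R / (2 * (x + 1))%N%:R.
pose dl x (_ : nat) : R^o := 1 / (M * (x + 1) ^ k)%N%:R.
pose rr x j : R^o := \sum_(i < n) RC i (y x) 0%N * tg x j ^+ i - dl x j.
have FJ : F2 (fun x _ => J x).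
  by apply: F2_mul; [exact: F2_const | apply: F2_add; [exact: F2_fst | exact: F2_const]].
have Fy : F2 (fun x _ => y x).
  apply: F2_sub; last exact: F2_const.
  apply: F2_mul; first exact: F2_const.
  by apply: F2_exp; apply: F2_add; [exact: F2_fst | exact: F2_const].
have Ftg : Frat2 tg.
  have FD : F2 (fun x _ => 2 * (x + 1))%N.
    by apply: F2_mul; [exact: F2_const | apply: F2_add; [exact: F2_fst | exact: F2_const]].
  exact: (Frat2_add (Frat2_crat tw B.+1 E) (Frat2_mul (Frat2_nat F2_snd) (Frat2_inv (Frat2_nat FD)))).
have Fdl : Frat2 dl.
  have FD : F2 (fun x _ => M * (x + 1) ^ k)%N.
    apply: F2_mul; first exact: F2_const.
    by apply: F2_exp; apply: F2_add; [exact: F2_fst | exact: F2_const].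
  exact: (Frat2_mul (Frat2_cnat 1) (Frat2_inv (Frat2_nat FD))).
have Frr : Frat2 rr.
  apply: (Frat2_sub _ Fdl).
  apply: (Frat2_sum (r := fun (i : 'I_n) x j => RC i (y x) 0%N * tg x j ^+ i)) => i.
  apply: Frat2_mul; last exact: Frat2_exp.
  exact: (Frat2_subst (HRC i).1 Fy (F2_const 0)).
have [TT [FT HT]] := Frat2_test Frr.
pose mu x b := find (fun j => (TT x j == 0%N) || (j == b)) (iota 0 b.+1).
have Fmu : F2 mu := F2_min FT.
pose out x (_ : nat) := tg x (mu x (J x)).
have Fout : Frat2 out.
  exact: (Frat2_subst Ftg F2_fst (F2_subst Fmu F2_fst FJ)).
apply: (@comp_of_approx _ _ 1 K Fout) => x hx.
have X1 : 0 < x%:R + 1 :> R^o by rewrite natr1 ltr0n.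
pose eps : R^o := 1 / (x%:R + 1).
pose h : R^o := eps / 2.
have epsp : 0 < eps by rewrite /eps divr_gt0.
have hp : 0 < h by rewrite /h divr_gt0.
have epseta : eps <= eta.
  rewrite /eps ler_pdivrMr //.
  move: HK; rewrite ler_pdivrMr // => HK.
  have : K%:R <= x%:R :> R^o by rewrite ler_nat.
  nra.
have tgE : forall j, tg x j = c + j%:R * h.
  move=> j; rewrite /tg /h /eps natrM natrD.
  by field; rewrite gt_eqF.
have tgc : forall j, c <= tg x j.
  by move=> j; rewrite tgE lerDl mulr_ge0 // ltW.
have tgZ : forall j, (j <= J x)%N -> tg x j <= c + Z%:R / 2.
  move=> j hj; rewrite tgE lerD2l.
  have : j%:R <= Z%:R * (x%:R + 1) :> R^o by rewrite natr1 -natrM ler_nat -addn1.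
  have -> : Z%:R / 2 = Z%:R * (x%:R + 1) * h by rewrite /h /eps; field; rewrite gt_eqF.
  by move=> hj'; exact: ler_wpM2r (ltW hp) _ _ hj'.
have dlp : 0 < dl x 0%N by rewrite /dl /M divr_gt0 ?ltr0n ?muln_gt0 ?expn_gt0 ?addn1.
have approx : forall j, (j <= J x)%N ->
    `|\sum_(i < n) RC i (y x) 0%N * tg x j ^+ i - p.[tg x j]| <= dl x 0%N / 2.
  move=> j hj.
  have ht : `|tg x j| <= T1%:R.
    rewrite /T1 -natr1; move: (tgc j) (tgZ j hj) HT0.
    case: (lerP 0 c) => hc; [rewrite ger0_norm // | rewrite ltr0_norm //];
    rewrite ler_norml; lra.
  have hT1 : 1 <= T1%:R :> R^o by rewrite ler1n.
  have := approx_poly (A := fun i => RC i (y x) 0%N) (fun i => (HRC i).2 (y x) 0%N) ht hT1.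
  move/le_trans; apply.
  have -> : (y x)%:R + 1 = (Y * (x + 1) ^ k)%N%:R :> R^o.
    by rewrite natr1 /y; congr (_%:R); rewrite subn1 prednK // /Y muln_gt0 expn_gt0 addn1.
  rewrite -/n -natrX -natrM mul1r.
  have -> : dl x 0%N / 2 = 1%:R / (2 * (M * (x + 1) ^ k))%N%:R.
    by rewrite /dl natrM; field; rewrite !pnatr_eq0 expn_eq0 addn1.
  rewrite ler_nat_frac; first last.
  - by rewrite /M !muln_gt0 ?expn_gt0 ?addn1.
  - by rewrite /Y !muln_gt0 ?expn_gt0 ?addn1.
  rewrite /Y mul1n mulSn; apply: leq_trans (leq_addl _ _).
  by have -> : (n * T1 ^ n * (2 * (M * (x + 1) ^ k)) = 2 * M * n * T1 ^ n * (x + 1) ^ k)%N by ring.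
have rrE : forall j, rr x j = \sum_(i < n) RC i (y x) 0%N * tg x j ^+ i - dl x 0%N by [].
have negb : forall j, (j <= J x)%N -> tg x j <= s -> rr x j < 0.
  move=> j hj hs; have := approx j hj; rewrite rrE.
  have : p.[tg x j] <= 0 by apply: Hl; rewrite hs andbT (le_trans cse).
  move=> hp0; rewrite ler_norml => /andP[_ h2]; lra.
pose v : R^o := (s - c + h) / h.
have v0 : 0 <= v by rewrite /v divr_ge0 // ?ltW //; lra.
have /andP[tv1 tv2] := truncn_itv v0.
set tv := Num.truncn v in tv1 tv2.
pose j0 := tv.+1.
have vh : v * h = s - c + h by rewrite /v divfK // lt0r_neq0.
have tj0a : s + h < tg x j0.
  rewrite tgE; have := ltr_pM2r hp; move=> /(_ v j0%:R) => e.
  have : v * h < j0%:R * h by rewrite e.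
  lra.
have tj0b : tg x j0 <= s + eps.
  rewrite tgE -natr1.
  have : tv%:R * h <= v * h by rewrite ler_pM2r.
  have : eps = 2 * h by rewrite /h; field.
  lra.
have j0J : (j0 <= J x)%N.
  rewrite -(ler_nat R^o) /J natrM natrD.
  have : v = 2 * (s - c) * (x%:R + 1) + 1.
    by rewrite /v /h /eps; field; rewrite gt_eqF.
  have := ler_wpM2r (ltW X1) HZ.
  have : 1 <= x%:R + 1 :> R^o by rewrite lerDr.
  rewrite /j0 -natr1; nra.
have posj0 : 0 < rr x j0.
  have hp0 : m * h ^+ k <= p.[tg x j0].
    apply: le_trans (Hr _ _); last by apply/andP; split; lra.
    apply: ler_wpM2l; first exact: ltW.
    by apply: lerXn2r; rewrite ?nnegrE; lra.
  have h2dl : 2 * dl x 0%N <= m * h ^+ k.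
    have hMm : 2 ^+ k.+1 <= m * M%:R.
      move: HM0; rewrite ler_pdivrMr // => HM0.
      apply: (le_trans HM0); rewrite mulrC ler_pM2l // ler_nat /M //.
    have P0 : (x%:R + 1) ^+ k != 0 :> R^o by rewrite expf_neq0 // gt_eqF.
    have M0' : M%:R != 0 :> R^o by rewrite pnatr_eq0.
    have -> : 2 * dl x 0%N = 2 ^+ k.+1 * (1 / (2 ^+ k * M%:R * (x%:R + 1) ^+ k)).
      rewrite /dl natrM natrX natrD exprS; field.
      by apply/and3P; split; [exact: P0 | exact: M0' | rewrite expf_neq0 // pnatr_eq0].
    have -> : m * h ^+ k = (m * M%:R) * (1 / (2 ^+ k * M%:R * (x%:R + 1) ^+ k)).
      have -> : h ^+ k = ((x%:R + 1) ^+ k * 2 ^+ k)^-1.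
        by rewrite /h /eps !div1r -invfM exprVn exprMn.
      field.
      by apply/and3P; split; [exact: P0 | exact: M0' | rewrite expf_neq0 // pnatr_eq0].
    apply: ler_wpM2r => //; apply: ltW; rewrite divr_gt0 // !mulr_gt0 ?exprn_gt0 //.
  have := approx j0 j0J; rewrite rrE ler_norml => /andP[h1 _]; lra.
have [mub mu1 mu2] : [/\ (mu x (J x) <= J x)%N,
    (TT x (mu x (J x)) == 0%N) || (mu x (J x) == J x) &
    forall i, (i < mu x (J x))%N -> ~~ (TT x i == 0%N)] :=
  min_spec (fun j => TT x j == 0%N) (J x).
have hle : (mu x (J x) <= j0)%N.
  by rewrite leqNgt; apply/negP => /mu2; rewrite HT posj0.
have posm : 0 < rr x (mu x (J x)).
  rewrite -HT; case/orP: mu1 => // /eqP e.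
  have -> : mu x (J x) = j0 by apply/eqP; rewrite eqn_leq hle e j0J.
  by rewrite HT.
have gts : s < tg x (mu x (J x)).
  by rewrite ltNge; apply/negP => hs; have := negb _ mub hs; lra.
have lem : tg x (mu x (J x)) <= tg x j0.
  by rewrite !tgE lerD2l ler_pM2r // ler_nat.
have -> : 1%:R / (x%:R + 1) = eps by [].
rewrite /out ger0_norm; lra.
Qed.

Lemma main_sec : real_closed_subfield (F_computable F).
Proof.
split; first exact: S_0.
split; first exact: S_1.
split; first by move=> a b; exact: S_add.
split; first by move=> a; exact: S_opp.
split; first by move=> a b; exact: S_mul.
split; first by move=> a; exact: S_inv.
move=> p a b Hp Sa Sb ab /andP[pa pb].
case pa0 : (p.[a] == 0); first by exists a; split => //; rewrite lexx ab.
case pb0 : (p.[b] == 0); first by exists b; split => //; rewrite lexx ab.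
have pa' : p.[a] < 0 by rewrite lt_neqAle pa0 pa.
have pb' : 0 < p.[b] by rewrite lt_neqAle eq_sym pb0 pb.
have ab' : a < b.
  rewrite lt_neqAle ab andbT; apply/eqP => e; move: pa' pb'; rewrite e; lra.
have [s [q [k [/andP[a_s sb] pE ok qs]]]] := good_root ab' pa' pb'.
have [eta [m [eta0 m0 Hl Hr]]] := good_local pE ok qs.
exists s; split.
- exact: (root_computable Hp eta0 m0 Hl Hr).
- by rewrite !ltW.
- rewrite /root pE hornerMX subrr expr0n.
  by case: (k) ok => //= ? _; rewrite mulr0.
Qed.

End FClosure.

Theorem mainTheorem14 (F : fclass) :
  standard_conditions F -> closed_minimizer F ->
  real_closed_subfield (F_computable F).
Proof. by move=> HF HM; exact: (main_sec HF HM). Qed.
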